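(* Let $\mathfrak e_1,\mathfrak e_1',\mathfrak e_2$ be virtual extended $\mathbb Z$-segments with $\mathrm{Supp}(\mathfrak e_1)=\mathrm{Supp}(\mathfrak e_1')$, and with $\mathrm{Supp}(\mathfrak e_1)\subseteq\mathrm{Supp}(\mathfrak e_2)$ or $\mathrm{Supp}(\mathfrak e_1)\supseteq\mathrm{Supp}(\mathfrak e_2)$. Write $R(\mathfrak e_1,\mathfrak e_2)=(\widetilde{\mathfrak e_2},\widetilde{\mathfrak e_1})$ and $R(\mathfrak e_1',\mathfrak e_2)=(\widetilde{\mathfrak e_2}',\widetilde{\mathfrak e_1}')$. Then: (1) if $\mathfrak e_1\ne\mathfrak e_1'$, then $\widetilde{\mathfrak e_1}\ne\widetilde{\mathfrak e_1}'$; (2) if $\mathfrak e_1$ and $\mathfrak e_1'$ are adjacent, then $\widetilde{\mathfrak e_1}$ and $\widetilde{\mathfrak e_1}'$ are adjacent. Consequently $\mathfrak e_1\mapsto\widetilde{\mathfrak e_1}$ is a bijection of the set of virtual extended $\mathbb Z$-segments with support $\mathrm{Supp}(\mathfrak e_1)$ sending virtual intervals to virtual intervals; the analogous statement holds for the map given by $R(\mathfrak e_1,-)$.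
   Context: A $\mathbb Z$-segment is $[A,B]=\{A,\dots,B\}$, $A\ge B$ integers, length $b=A-B+1$. A virtual extended $\mathbb Z$-segment is $([A,B],l,\eta)$, $l\in\mathbb Z$, $l\le b/2$, $\eta\in\{\pm1\}$ with $\eta\sim-\eta$ iff $b=2l$; $\mathrm{Supp}=[A,B]$. Two are adjacent if they have the same support and either admit lifts with $\eta_1=\eta_2$, $|l_1-l_2|=1$, or $b$ is odd, $l_1=l_2=(b-1)/2$, $\eta_1=-\eta_2$. A virtual interval is a finite set of distinct virtual extended segments $\{\mathfrak e_1,\dots,\mathfrak e_r\}$ with $\mathfrak e_i$ adjacent to $\mathfrak e_{i+1}$. Row exchange: for $\mathfrak e_i=([A_i,B_i],l_i,\eta_i)$ ($i=1,2$) with nested supports, $R(\mathfrak e_1,\mathfrak e_2)=(\mathfrak e_2',\mathfrak e_1')$ with $\mathfrak e_i'=([A_i,B_i],l_i',\eta_i')$, where $b_i=A_i-B_i+1$, $\epsilon=(-1)^{A_1-B_1}\eta_1\eta_2$ (any lifts). Case 1, $[A_1,B_1]\subseteq[A_2,B_2]$: $(l_1',\eta_1')=(l_1,(-1)^{A_2-B_2}\eta_1)$ and (a) if $\epsilon=1$, $b_2-2l_2<2(b_1-2l_1)$: $(l_2',\eta_2')=(b_2-(l_2+(b_1-2l_1)),(-1)^{A_1-B_1}\eta_2)$; (b) if $\epsilon=1$, $b_2-2l_2\ge2(b_1-2l_1)$: $(l_2',\eta_2')=(l_2+(b_1-2l_1),(-1)^{A_1-B_1+1}\eta_2)$; (c)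 if $\epsilon=-1$: $(l_2',\eta_2')=(l_2-(b_1-2l_1),(-1)^{A_1-B_1+1}\eta_2)$. Case 2, $[A_1,B_1]\supsetneq[A_2,B_2]$: $(l_2',\eta_2')=(l_2,(-1)^{A_1-B_1}\eta_2)$ and (a) if $\epsilon=1$, $b_1-2l_1<2(b_2-2l_2)$: $(l_1',\eta_1')=(b_1-(l_1+(b_2-2l_2)),(-1)^{A_2-B_2}\eta_1)$; (b) if $\epsilon=1$, $b_1-2l_1\ge2(b_2-2l_2)$: $(l_1',\eta_1')=(l_1+(b_2-2l_2),(-1)^{A_2-B_2+1}\eta_1)$; (c) if $\epsilon=-1$: $(l_1',\eta_1')=(l_1-(b_2-2l_2),(-1)^{A_2-B_2+1}\eta_1)$. *)

(* Defs.v *)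
From Stdlib Require Import ZArith List Bool.
Open Scope Z_scope.

(** A virtual extended Z-segment ([A,B], l, eta), given by a representative
    ("lift"); the actual object is its class modulo [veq]. *)
Record ves := mkVES { vA : Z; vB : Z; vl : Z; veta : Z }.

Definition vlen (e : ves) : Z := vA e - vB e + 1.

Definition supp (e : ves) : Z * Z := (vA e, vB e).

Definition valid (e : ves) : Prop :=
  vB e <= vA e /\ 2 * vl e <= vlen e /\ (veta e = 1 \/ veta e = -1).

Definition veq (e f : ves) : Prop :=
  vA e = vA f /\ vB e = vB f /\ vl e = vl f /\
  (veta e = veta f \/ vlen e = 2 * vl e).

Definition subseg (S S' : Z * Z) : Prop :=
  snd S' <= snd S /\ fst S <= fst S'.

Definition adjacent (e1 e2 : ves) : Prop :=
  supp e1 = supp e2 /\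
  ((exists x y, valid x /\ valid y /\ veq e1 x /\ veq e2 y /\
                veta x = veta y /\ Z.abs (vl x - vl y) = 1)
   \/ (Z.odd (vlen e1) = true /\ 2 * vl e1 = vlen e1 - 1 /\
       2 * vl e2 = vlen e2 - 1 /\ veta e1 = - veta e2)).

Fixpoint chain_adj (s : list ves) : Prop :=
  match s with
  | x :: ((y :: _) as t) => adjacent x y /\ chain_adj t
  | _ => True
  end.

Definition virtual_interval (s : list ves) : Prop :=
  Forall valid s /\ ForallOrdPairs (fun x y => ~ veq x y) s /\ chain_adj s.

Definition sgnpow (k : Z) : Z := if Z.even k then 1 else -1.

(** Row exchange R(e1,e2) = (e2', e1'). Case 1 when [A1,B1] ⊆ [A2,B2],
    otherwise case 2 (only meaningful for nested supports). *)
Definition row_exchange (e1 e2 : ves) : ves * ves :=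
  let A1 := vA e1 in let B1 := vB e1 in let l1 := vl e1 in let h1 := veta e1 in
  let A2 := vA e2 in let B2 := vB e2 in let l2 := vl e2 in let h2 := veta e2 in
  let b1 := vlen e1 in let b2 := vlen e2 in
  let eps := sgnpow (A1 - B1) * h1 * h2 in
  if (B2 <=? B1) && (A1 <=? A2) then
    let e1' := mkVES A1 B1 l1 (sgnpow (A2 - B2) * h1) in
    let e2' :=
      if eps =? 1 then
        if b2 - 2 * l2 <? 2 * (b1 - 2 * l1)
        then mkVES A2 B2 (b2 - (l2 + (b1 - 2 * l1))) (sgnpow (A1 - B1) * h2)
        else mkVES A2 B2 (l2 + (b1 - 2 * l1)) (sgnpow (A1 - B1 + 1) * h2)
      else mkVES A2 B2 (l2 - (b1 - 2 * l1)) (sgnpow (A1 - B1 + 1) * h2) in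
    (e2', e1')
  else
    let e2' := mkVES A2 B2 l2 (sgnpow (A1 - B1) * h2) in
    let e1' :=
      if eps =? 1 then
        if b1 - 2 * l1 <? 2 * (b2 - 2 * l2)
        then mkVES A1 B1 (b1 - (l1 + (b2 - 2 * l2))) (sgnpow (A2 - B2) * h1)
        else mkVES A1 B1 (l1 + (b2 - 2 * l2)) (sgnpow (A2 - B2 + 1) * h1)
      else mkVES A1 B1 (l1 - (b2 - 2 * l2)) (sgnpow (A2 - B2 + 1) * h1) in
    (e2', e1').

Definition bij_on_supp_preserving_intervals (S : Z * Z) (F : ves -> ves) : Prop :=
  (forall e, valid e -> supp e = S -> valid (F e) /\ supp (F e) = S) /\
  (forall e f, valid e -> valid f -> supp e = S -> supp f = S ->
     veq e f -> veq (F e) (F f)) /\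
  (forall e f, valid e -> valid f -> supp e = S -> supp f = S ->
     veq (F e) (F f) -> veq e f) /\
  (forall g, valid g -> supp g = S ->
     exists e, valid e /\ supp e = S /\ veq (F e) g) /\
  (forall s, Forall (fun e => supp e = S) s -> virtual_interval s ->
     virtual_interval (map F s)).

(* Main.v *)
Require Import Defs.
From Stdlib Require Import ZArith List Lia Bool.
Open Scope Z_scope.

Definition tt (e : ves) : Z := veta e * (vlen e - 2 * vl e).

Lemma sg x : sgnpow x = 1 \/ sgnpow x = -1.
Proof. unfold sgnpow; destruct (Z.even x); auto. Qed.

Lemma sgS x : sgnpow (x + 1) = - sgnpow x.
Proof. unfold sgnpow; rewrite Z.even_add; cbn [vA vB vl veta]; destruct (Z.even x); reflexivity. Qed.

Lemma veq_tt e f : veq e f -> tt e = tt f.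
Proof.
  destruct e as [A B l h], f as [A' B' l' h']; unfold veq, tt, vlen; cbn [vA vB vl veta]; intros (-> & -> & -> & [-> | H]); [reflexivity|].
  rewrite H; ring.
Qed.

Lemma tt_veq e f : valid e -> valid f -> supp e = supp f -> tt e = tt f -> veq e f.
Proof.
  destruct e as [A B l h], f as [A' B' l' h']; unfold valid, veq, tt, supp, vlen; cbn [vA vB vl veta].
  intros (? & ? & [-> | ->]) (? & ? & [-> | ->]) Hs Ht; injection Hs as -> ->; lia.
Qed.

Lemma adj_tt e f : valid e -> valid f -> adjacent e f -> Z.abs (tt e - tt f) = 2.
Proof.
  intros Ve Vf [Hs [(x & y & Vx & Vy & Ex & Ey & Hh & Hl) | (Ho & H1 & H2 & Hh)]].
  - rewrite (veq_tt _ _ Ex), (veq_tt _ _ Ey).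
    destruct x as [A B l h], y as [A' B' l' h'], e as [a b m k], f as [a' b' m' k'].
    unfold valid, veq, tt, supp, vlen in *; cbn [vA vB vl veta] in *.
    injection Hs as <- <-.
    destruct Ex as (<- & <- & _), Ey as (<- & <- & _).
    subst h'. destruct Vx as (_&_&[->| ->]); lia.
  - destruct e as [A B l h], f as [A' B' l' h']; unfold tt, vlen, supp in *; cbn [vA vB vl veta] in *.
    injection Hs as <- <-. subst h.
    replace (A - B + 1 - 2 * l) with 1 by lia.
    replace (A - B + 1 - 2 * l') with 1 by lia. unfold valid in Vf; cbn [veta] in Vf; destruct Vf as (_&_&[->| ->]); lia.
Qed.

Lemma tt_adj e f : valid e -> valid f -> supp e = supp f -> Z.abs (tt e - tt f) = 2 -> adjacent e f.
Proof.
  intros Ve Vf Hs Ht. split; [exact Hs|].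
  destruct e as [A B l h], f as [A' B' l' h']; unfold supp in Hs; cbn [vA vB vl veta] in Hs; injection Hs as <- <-.
  pose proof Ve as Ve'; pose proof Vf as Vf'.
  unfold valid, tt, vlen in *; cbn [vA vB vl veta] in *.
  destruct Ve as (? & ? & [-> | ->]), Vf as (? & ? & [-> | ->]).
  - left. exists (mkVES A B l 1), (mkVES A B l' 1). unfold veq; cbn [vA vB vl veta]; repeat split; auto; lia.
  - destruct (Z.eq_dec (A - B + 1 - 2 * l) 1).
    + right. cbn [vA vB vl veta vlen]. repeat split; try lia.
      replace (A - B + 1) with (1 + 2 * l) by lia. rewrite Z.odd_add_mul_2. reflexivity.
    + left. destruct (Z.eq_dec (A - B + 1 - 2 * l) 0).
      * exists (mkVES A B l (-1)), (mkVES A B l' (-1)). unfold veq, valid, vlen; cbn [vA vB vl veta]; repeat split; auto; lia.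
      * exists (mkVES A B l 1), (mkVES A B l' 1). unfold veq, valid, vlen; cbn [vA vB vl veta]; repeat split; auto; lia.
  - destruct (Z.eq_dec (A - B + 1 - 2 * l) 1).
    + right. cbn [vA vB vl veta vlen]. repeat split; try lia.
      replace (A - B + 1) with (1 + 2 * l) by lia. rewrite Z.odd_add_mul_2. reflexivity.
    + left. destruct (Z.eq_dec (A - B + 1 - 2 * l) 0).
      * exists (mkVES A B l 1), (mkVES A B l' 1). unfold veq, valid, vlen; cbn [vA vB vl veta]; repeat split; auto; lia.
      * exists (mkVES A B l (-1)), (mkVES A B l' (-1)). unfold veq, valid, vlen; cbn [vA vB vl veta]; repeat split; auto; lia.
  - left. exists (mkVES A B l (-1)), (mkVES A B l' (-1)). unfold veq; cbn [vA vB vl veta]; repeat split; auto; lia.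
Qed.

Ltac crush :=
  rewrite ?sgS;
  repeat match goal with
  | |- context [sgnpow ?x] => let H := fresh in destruct (sg x) as [H|H]; rewrite H
  end;
  repeat match goal with
  | |- context [if (?a =? ?b) then _ else _] => destruct (Z.eqb_spec a b)
  | |- context [if (?a <? ?b) then _ else _] => destruct (Z.ltb_spec a b)
  end;
  unfold valid, supp, tt, vlen in *; cbn [vA vB vl veta fst snd] in *; repeat split; try lia.

Definition Aff (S : Z * Z) (F : ves -> ves) :=
  exists c d, (c = 1 \/ c = -1) /\ (exists d', d = 2 * d') /\
   forall e, valid e -> supp e = S -> valid (F e) /\ supp (F e) = S /\ tt (F e) = c * tt e + d.

Lemma snd_aff S e2 : valid e2 -> Aff S (fun e => snd (row_exchange e e2)).
Proof.
  destruct S as [A B], e2 as [A2 B2 l2 h2]. intros (V1 & V2 & V3); cbn [vA vB vl veta] in *; unfold vlen in V2; cbn [vA vB vl veta] in V2.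
  destruct ((B2 <=? B) && (A <=? A2)) eqn:Hc.
  - exists (sgnpow (A2 - B2)), 0. split; [apply sg|]. split; [exists 0; lia|].
    intros [A1 B1 l1 h1] (W1 & W2 & W3) Hs; unfold supp in Hs; cbn [vA vB vl veta] in *; injection Hs as -> ->.
    unfold vlen in W2; cbn [vA vB vl veta] in W2.
    unfold row_exchange; cbn [vA vB vl veta vlen fst snd]. rewrite Hc. cbn [fst snd].
    destruct W3 as [-> | ->]; destruct V3 as [-> | ->]; crush.
  - exists (sgnpow (A2 - B2 + 1)), (-2 * (A2 - B2 + 1 - 2 * l2) * sgnpow (A2 - B2 + 1) * sgnpow (A - B) * h2).
    split; [apply sg|]. split; [exists (- (A2 - B2 + 1 - 2 * l2) * sgnpow (A2 - B2 + 1) * sgnpow (A - B) * h2); ring|].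
    intros [A1 B1 l1 h1] (W1 & W2 & W3) Hs; unfold supp in Hs; cbn [vA vB vl veta] in *; injection Hs as -> ->.
    unfold vlen in W2; cbn [vA vB vl veta] in W2.
    unfold row_exchange; cbn [vA vB vl veta vlen fst snd]. rewrite Hc. cbn [fst snd].
    destruct W3 as [-> | ->]; destruct V3 as [-> | ->]; crush.
Qed.

Lemma fst_aff S e1 : valid e1 -> Aff S (fun e => fst (row_exchange e1 e)).
Proof.
  destruct S as [A B], e1 as [A1 B1 l1 h1]. intros (V1 & V2 & V3); cbn [vA vB vl veta] in *; unfold vlen in V2; cbn [vA vB vl veta] in V2.
  destruct ((B <=? B1) && (A1 <=? A)) eqn:Hc.
  - exists (- sgnpow (A1 - B1)), (2 * (A1 - B1 + 1 - 2 * l1) * h1). split; [destruct (sg (A1 - B1)) as [-> | ->]; lia|]. split; [exists ((A1 - B1 + 1 - 2 * l1) * h1); ring|].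
    intros [A2 B2 l2 h2] (W1 & W2 & W3) Hs; unfold supp in Hs; cbn [vA vB vl veta] in *; injection Hs as -> ->.
    unfold vlen in W2; cbn [vA vB vl veta] in W2.
    unfold row_exchange; cbn [vA vB vl veta vlen fst snd]. rewrite Hc. cbn [fst snd].
    destruct W3 as [-> | ->]; destruct V3 as [-> | ->]; crush.
  - exists (sgnpow (A1 - B1)), 0. split; [apply sg|]. split; [exists 0; lia|].
    intros [A2 B2 l2 h2] (W1 & W2 & W3) Hs; unfold supp in Hs; cbn [vA vB vl veta] in *; injection Hs as -> ->.
    unfold vlen in W2; cbn [vA vB vl veta] in W2.
    unfold row_exchange; cbn [vA vB vl veta vlen fst snd]. rewrite Hc. cbn [fst snd].
    destruct W3 as [-> | ->]; destruct V3 as [-> | ->]; crush.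
Qed.

Lemma chain_map S F c d : (c = 1 \/ c = -1) ->
  (forall e, valid e -> supp e = S -> valid (F e) /\ supp (F e) = S /\ tt (F e) = c * tt e + d) ->
  forall s, Forall (fun e => supp e = S) s -> Forall valid s -> chain_adj s -> chain_adj (map F s).
Proof.
  intros Hc HF s. induction s as [|x t IH]; [simpl; auto|].
  intros Hs Hv Hch. destruct t as [|y u]; [simpl; auto|].
  apply Forall_cons_iff in Hs as [Sx Hs']. apply Forall_cons_iff in Hv as [Vx0 Hv'].
  pose proof Hs' as Hs''. pose proof Hv' as Hv''.
  apply Forall_cons_iff in Hs'' as [Sy _]. apply Forall_cons_iff in Hv'' as [Vy0 _].
  destruct Hch as [Ha Hch]. cbn [map chain_adj]. split.
  - destruct (HF x) as (Vx & Sx' & Tx); auto. destruct (HF y) as (Vy & Sy' & Ty); auto.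
    apply tt_adj; auto. congruence. pose proof (adj_tt _ _ Vx0 Vy0 Ha).
    rewrite Tx, Ty. destruct Hc; subst; lia.
  - apply (IH Hs' Hv' Hch).
Qed.

Lemma fop_map (P : ves -> Prop) R R' (F : ves -> ves) s : Forall P s ->
  (forall x y, P x -> P y -> R x y -> R' (F x) (F y)) -> ForallOrdPairs R s -> ForallOrdPairs R' (map F s).
Proof.
  intros HP HR H. induction H; cbn [map]; [constructor|].
  apply Forall_cons_iff in HP as [Pa HP]. constructor; [|auto].
  clear IHForallOrdPairs H0. induction H; cbn [map]; [constructor|].
  apply Forall_cons_iff in HP as [Px HP']. constructor; auto.
Qed.

Lemma gen S F : Aff S F -> bij_on_supp_preserving_intervals S F.
Proof.
  intros (c & d & Hc & (d' & Hd) & HF).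
  unfold bij_on_supp_preserving_intervals. split; [|split; [|split; [|split]]].
  - intros e V Se. destruct (HF e V Se) as (? & ? & ?). auto.
  - intros e f Ve Vf Se Sf E. destruct (HF e Ve Se) as (? & ? & ?), (HF f Vf Sf) as (? & ? & ?).
    apply tt_veq; auto. congruence. apply veq_tt in E. congruence.
  - intros e f Ve Vf Se Sf E. destruct (HF e Ve Se) as (? & ? & ?), (HF f Vf Sf) as (? & ? & ?).
    apply tt_veq; auto. congruence. apply veq_tt in E. destruct Hc; subst; lia.
  - intros [A B l h] Vg Sg. pose proof Vg as Vg'. destruct Vg' as (V1 & V2 & V3). unfold vlen in V2; cbn [vA vB vl veta] in *.
    set (w := c * (tt (mkVES A B l h) - d)).
    assert (Hw : w = c * h * (A - B + 1 - 2 * (l + h * d'))).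
    { unfold w, tt, vlen; cbn [vA vB vl veta]. subst d. destruct Hc, V3; subst; lia. }
    destruct (Z_le_gt_dec 0 (A - B + 1 - 2 * (l + h * d'))) as [Hp|Hn].
    + set (e := mkVES A B (l + h * d') (c * h)).
      assert (Ve : valid e). { unfold e, valid, vlen; cbn [vA vB vl veta]. destruct Hc, V3; subst; lia. }
      assert (Se : supp e = S) by (rewrite <- Sg; reflexivity).
      exists e. split; [auto|split; [auto|]].
      destruct (HF e Ve Se) as (? & ? & Ht). apply tt_veq; auto. congruence.
      rewrite Ht. assert (tt e = w). { rewrite Hw. unfold e, tt, vlen; cbn [vA vB vl veta]. ring. }
      rewrite H1. unfold w. destruct Hc; subst; lia.
    + set (e := mkVES A B (A - B + 1 - (l + h * d')) (- (c * h))).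
      assert (Ve : valid e). { unfold e, valid, vlen; cbn [vA vB vl veta]. destruct Hc, V3; subst; lia. }
      assert (Se : supp e = S) by (rewrite <- Sg; reflexivity).
      exists e. split; [auto|split; [auto|]].
      destruct (HF e Ve Se) as (? & ? & Ht). apply tt_veq; auto. congruence.
      rewrite Ht. assert (tt e = w). { rewrite Hw. unfold e, tt, vlen; cbn [vA vB vl veta]. ring. }
      rewrite H1. unfold w. destruct Hc; subst; lia.
  - intros s Hs (Hv & Hd2 & Hch). split; [|split].
    + clear Hd2 Hch. induction s; inversion Hs; inversion Hv; subst; constructor; auto.
      destruct (HF a) as (? & ? & ?); auto.
    + clear Hch. apply (fop_map (fun e => valid e /\ supp e = S) (fun x y => ~ veq x y)); auto.
      { apply Forall_and; auto. }
      intros x y [Vx Sx] [Vy Sy] NE E. apply NE.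
      destruct (HF x) as (? & ? & ?), (HF y) as (? & ? & ?); auto.
      apply tt_veq; auto. congruence. apply veq_tt in E. destruct Hc; subst; lia.
    + eapply chain_map; eauto.
Qed.

Theorem lemma4p12 :
  (forall e1 e1' e2 : ves,
     valid e1 -> valid e1' -> valid e2 ->
     supp e1 = supp e1' ->
     (subseg (supp e1) (supp e2) \/ subseg (supp e2) (supp e1)) ->
     (~ veq e1 e1' -> ~ veq (snd (row_exchange e1 e2)) (snd (row_exchange e1' e2))) /\
     (adjacent e1 e1' -> adjacent (snd (row_exchange e1 e2)) (snd (row_exchange e1' e2))))
  /\
  (forall (S : Z * Z) (e2 : ves),
     snd S <= fst S -> valid e2 ->
     (subseg S (supp e2) \/ subseg (supp e2) S) ->
     bij_on_supp_preserving_intervals S (fun e => snd (row_exchange e e2)))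
  /\
  (forall (e1 : ves) (S : Z * Z),
     valid e1 -> snd S <= fst S ->
     (subseg (supp e1) S \/ subseg S (supp e1)) ->
     bij_on_supp_preserving_intervals S (fun e => fst (row_exchange e1 e))).
Proof.
  split; [|split].
  - intros e1 e1' e2 V1 V1' V2 Hs _.
    destruct (snd_aff (supp e1) e2 V2) as (c & d & Hc & _ & HF).
    destruct (HF e1 V1 eq_refl) as (Va & Sa & Ta).
    destruct (HF e1' V1' (eq_sym Hs)) as (Vb & Sb & Tb).
    split.
    + intros NE E. apply NE. apply tt_veq; auto. apply veq_tt in E. destruct Hc; subst; lia.
    + intros Ad. apply tt_adj; auto. congruence. pose proof (adj_tt _ _ V1 V1' Ad).
      rewrite Ta, Tb. destruct Hc; subst; lia.
  - intros S e2 _ V2 _. apply gen, snd_aff, V2.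
  - intros e1 S V1 _ _. apply gen, fst_aff, V1.
Qed.
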